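(* (Upper bound) There is an absolute constant $C$ such that for every $n\geq 1$ and every pair of distinct strings $w,w'\in\{0,1\}^n$, there is a first-order sentence over $\tau_{\mathsf{string}}$ with at most $\log_2(n)+C$ quantifiers that is true in $\mathbf{B}_w$ and false in $\mathbf{B}_{w'}$; moreover this sentence can be taken in prenex form with a quantifier prefix that strictly alternates and ends with $\forall$. (Lower bound) For all sufficiently large $n$, there exist two $n$-bit strings $w,w'$ such that every first-order sentence separating $\{\mathbf{B}_w\}$ from $\{\mathbf{B}_{w'}\}$ has at least $\lfloor \log_2 n\rfloor$ quantifiers.
   Context: Vocabulary $\tau_{\mathsf{string}}=\langle <, S;\ \mathsf{min},\mathsf{max}\rangle$ with $<$ binary, $S$ unary, $\mathsf{min},\mathsf{max}$ constants. A string $w=w_1\cdots w_n\in\{0,1\}^n$ ($n\geq 1$) is encoded by the structure $\mathbf{B}_w$ with universe $\{1,\dots,n\}$, $<$ the usual order, $S=\{i: w_i=1\}$, $\mathsf{min}=1$, $\mathsf{max}=n$. A sentence separates $\mathcal{A}$ from $\mathcal{B}$ if it holds in every structure of $\mathcal{A}$ and fails in every structure of $\mathcal{B}$. The number of quantifiers is the number of quantifier occurrences. *)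

(* Defs.v *)
From Stdlib Require Import Reals Arith List Lia.
Import ListNotations.

Inductive term : Type :=
| TVar : nat -> term
| TMin : term
| TMax : term.

Inductive formula : Type :=
| FEq  : term -> term -> formula
| FLt  : term -> term -> formula
| FS   : term -> formula
| FNot : formula -> formula
| FAnd : formula -> formula -> formula
| FOr  : formula -> formula -> formula
| FImp : formula -> formula -> formula
| FEx  : nat -> formula -> formula
| FAll : nat -> formula -> formula.

Fixpoint qcount (phi : formula) : nat :=
  match phi with
  | FEq _ _ | FLt _ _ | FS _ => 0
  | FNot p => qcount p
  | FAnd p q | FOr p q | FImp p q => qcount p + qcount q
  | FEx _ p | FAll _ p => S (qcount p)
  end.

Definition term_var (t : term) (x : nat) : Prop :=
  match t with TVar y => y = x | _ => False end.

Fixpoint free_in (x : nat) (phi : formula) : Prop :=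
  match phi with
  | FEq t u | FLt t u => term_var t x \/ term_var u x
  | FS t => term_var t x
  | FNot p => free_in x p
  | FAnd p q | FOr p q | FImp p q => free_in x p \/ free_in x q
  | FEx y p | FAll y p => y <> x /\ free_in x p
  end.

Definition sentence (phi : formula) : Prop := forall x, ~ free_in x phi.

Fixpoint quantifier_free (phi : formula) : Prop :=
  match phi with
  | FEq _ _ | FLt _ _ | FS _ => True
  | FNot p => quantifier_free p
  | FAnd p q | FOr p q | FImp p q => quantifier_free p /\ quantifier_free q
  | FEx _ _ | FAll _ _ => False
  end.

(* Semantics in B_w: universe {1..n} with n = length w, usual order,
   S = {i | w_i = 1} (w_i = nth (i-1) w), min = 1, max = n. *)
Definition upd (a : nat -> nat) (x i : nat) : nat -> nat :=
  fun y => if Nat.eqb y x then i else a y.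

Definition eval_term (w : list bool) (a : nat -> nat) (t : term) : nat :=
  match t with
  | TVar x => a x
  | TMin => 1
  | TMax => length w
  end.

Fixpoint sat (w : list bool) (a : nat -> nat) (phi : formula) : Prop :=
  match phi with
  | FEq t u => eval_term w a t = eval_term w a u
  | FLt t u => eval_term w a t < eval_term w a u
  | FS t => nth (eval_term w a t - 1) w false = true
  | FNot p => ~ sat w a p
  | FAnd p q => sat w a p /\ sat w a q
  | FOr p q => sat w a p \/ sat w a q
  | FImp p q => sat w a p -> sat w a q
  | FEx x p => exists i, 1 <= i <= length w /\ sat w (upd a x i) p
  | FAll x p => forall i, 1 <= i <= length w -> sat w (upd a x i) p
  end.

(* Truth of a sentence in B_w (for sentences the assignment is irrelevant;
   we use the constant assignment to element 1, which lies in the universe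
   when n >= 1). *)
Definition holds (w : list bool) (phi : formula) : Prop := sat w (fun _ => 1) phi.

Definition separates (phi : formula) (w w' : list bool) : Prop :=
  sentence phi /\ holds w phi /\ ~ holds w' phi.

Fixpoint build_prenex (qs : list (bool * nat)) (psi : formula) : formula :=
  match qs with
  | [] => psi
  | (true, x) :: qs' => FAll x (build_prenex qs' psi)
  | (false, x) :: qs' => FEx x (build_prenex qs' psi)
  end.

Fixpoint strictly_alternating (bs : list bool) : Prop :=
  match bs with
  | b1 :: ((b2 :: _) as rest) => b1 <> b2 /\ strictly_alternating rest
  | _ => True
  end.

Definition alt_prenex_ending_forall (phi : formula) : Prop :=
  exists (qs : list (bool * nat)) (psi : formula),
    quantifier_free psi /\ phi = build_prenex qs psi /\
    strictly_alternating (map fst qs) /\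
    qs <> [] /\ fst (last qs (true, 0)) = true.

(* Main.v *)
Require Import Defs.
From Stdlib Require Import Reals Arith List.
From Stdlib Require Import Lia Lra Classical.
Import ListNotations.

Definition dist (x y : nat) := (x - y) + (y - x).
Definition EqC (T a b : nat) : Prop := a = b \/ (T <= a /\ T <= b).
Definition bt (P x y : nat) : nat :=
  if orb (andb (x <? P) (P <? y)) (andb (y <? P) (P <? x)) then 1 else 0.
Definition Good0 (x x' y y' : nat) : Prop :=
  (x < y /\ x' < y') \/ (x = y /\ x' = y') \/ (y < x /\ y' < x').
Definition GoodT (P Q T x x' y y' : nat) : Prop :=
  Good0 x x' y y' /\ bt P x y = bt Q x' y' /\ EqC (T + bt P x y) (dist x y) (dist x' y').
Definition SGood0 (P Q x x' : nat) : Prop := (x = P <-> x' = Q).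
Definition SGoodT (P Q T x x' : nat) : Prop :=
  ((x < P /\ x' < Q) \/ (x = P /\ x' = Q) \/ (P < x /\ Q < x')) /\ EqC (T-1) (dist x P) (dist x' Q).

Lemma bt_in P x y : x < P < y -> bt P x y = 1.
Proof. intros. unfold bt. destruct (Nat.ltb_spec x P), (Nat.ltb_spec P y); simpl; auto; lia. Qed.
Lemma bt_out P x y : x <= y -> (P <= x \/ y <= P) -> bt P x y = 0.
Proof. intros. unfold bt. destruct (Nat.ltb_spec x P), (Nat.ltb_spec P y), (Nat.ltb_spec y P), (Nat.ltb_spec P x); simpl; auto; lia. Qed.
Lemma bt_sym P x y : bt P x y = bt P y x.
Proof. unfold bt. destruct (x <? P), (P <? y), (y <? P), (P <? x); reflexivity. Qed.
Lemma bt_cases P x y : x <= y -> (bt P x y = 1 /\ x < P < y) \/ (bt P x y = 0 /\ (P <= x \/ y <= P)).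
Proof. intros. destruct (le_lt_dec P x); [right; split; [apply bt_out|]; lia|].
  destruct (le_lt_dec y P); [right; split; [apply bt_out|]; lia|]. left; split; [apply bt_in|]; lia. Qed.
Lemma dist_le x y : x <= y -> dist x y = y - x. Proof. unfold dist; lia. Qed.
Lemma dist_ge x y : y <= x -> dist x y = x - y. Proof. unfold dist; lia. Qed.
Lemma dist_sym x y : dist x y = dist y x. Proof. unfold dist; lia. Qed.

Lemma ex_max (D : nat -> Prop) i : D 1 -> 1 <= i ->
  exists l, 1 <= l <= i /\ D l /\ forall y, D y -> y <= i -> y <= l.
Proof.
  intros H1. induction i as [|i IH]; intros Hi; [lia|].
  destruct (classic (D (S i))) as [HD|HD].
  - exists (S i). split; [lia|]. split; auto.
  - destruct i as [|i]; [contradiction|].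
    destruct IH as [l [Hl [Dl Hm]]]; [lia|].
    exists l. split; [lia|]. split; auto.
    intros y Dy Hy. destruct (Nat.eq_dec y (S (S i))); [subst; contradiction|].
    apply Hm; auto; lia.
Qed.

Lemma ex_min (D : nat -> Prop) n : D n -> forall d i, n - i = d -> i <= n ->
  exists u, i <= u <= n /\ D u /\ forall y, D y -> i <= y -> u <= y.
Proof.
  intros Hn d. induction d as [|d IH]; intros i Hd Hi.
  - assert (i = n) by lia. subst. exists n. split; [lia|]. split; auto.
  - destruct (classic (D i)) as [HD|HD].
    + exists i. split; [lia|]. split; auto.
    + destruct (IH (S i)) as [u [Hu [Du Hm]]]; [lia|lia|].
      exists u. split; [lia|]. split; auto.
      intros y Dy Hy. destruct (Nat.eq_dec y i); [subst; contradiction|].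
      apply Hm; auto; lia.
Qed.

Lemma GoodT_mono P Q T x x' y y' : GoodT P Q (2*T) x x' y y' -> GoodT P Q T x x' y y'.
Proof. unfold GoodT, EqC. intros [A [B C]]. split; auto. split; auto. lia. Qed.
Lemma SGoodT_mono P Q T x x' : SGoodT P Q (2*T) x x' -> SGoodT P Q T x x'.
Proof. unfold SGoodT, EqC. intros [A B]. split; auto. lia. Qed.
Lemma SGoodT_0 P Q T x x' : SGoodT P Q T x x' -> SGood0 P Q x x'.
Proof. unfold SGoodT, SGood0. lia. Qed.
Lemma Good0_sym x x' y y' : Good0 x x' y y' -> Good0 y y' x x'.
Proof. unfold Good0. lia. Qed.
Lemma GoodT_sym P Q T x x' y y' : GoodT P Q T x x' y y' -> GoodT P Q T y y' x x'.
Proof. unfold GoodT. rewrite (bt_sym P y x), (bt_sym Q y' x'), (dist_sym y x), (dist_sym y' x').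
  intros [A [C D]]. split; [apply Good0_sym; auto|]. auto. Qed.

Lemma GoodT_lt P Q T x x' y y' : x < y -> GoodT P Q T x x' y y' ->
  x' < y' /\ bt P x y = bt Q x' y' /\ EqC (T + bt P x y) (y - x) (y' - x').
Proof. intros H [A [B C]]. unfold Good0 in A. assert (x' < y') by lia.
  rewrite !dist_le in C by lia. auto. Qed.
Lemma GoodT_intro P Q T x x' y y' : x < y -> x' < y' -> bt P x y = bt Q x' y' ->
  EqC (T + bt P x y) (y - x) (y' - x') -> GoodT P Q T x x' y y'.
Proof. intros. unfold GoodT, Good0. rewrite !dist_le by lia. split; [lia|auto]. Qed.
Lemma GoodT_eq P Q T x x' y y' : x = y -> GoodT P Q T x x' y y' -> x' = y'.
Proof. intros H [A _]. unfold Good0 in A. lia. Qed.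

Lemma bt_split P x y z : x < y -> y < z ->
  bt P x z = bt P x y + (if y =? P then 1 else 0) + bt P y z.
Proof. intros. destruct (Nat.eqb_spec y P).
  - subst. rewrite bt_in, (bt_out P x P), (bt_out P P z); lia.
  - destruct (bt_cases P x y), (bt_cases P y z); try lia.
    + rewrite bt_in; lia.
    + rewrite bt_in; lia.
    + rewrite bt_out; lia.
Qed.

Lemma EqC_add T e1 e2 e3 a b a' b' : 1 <= a -> 1 <= b -> 1 <= a' -> 1 <= b' ->
  e1 + e2 + e3 <= 1 -> EqC (T + e1) a a' -> EqC (T + e2) b b' -> EqC (T + (e1 + e3 + e2)) (a + b) (a' + b').
Proof. unfold EqC; lia. Qed.

Lemma GoodT_trans P Q T x x' y y' z z' : x <= y <= z ->
  GoodT P Q T x x' y y' -> GoodT P Q T y y' z z' -> SGood0 P Q y y' -> GoodT P Q T x x' z z'.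
Proof.
  intros H1 G1 G2 S.
  destruct (Nat.eq_dec x y) as [e|e]; [subst y; assert (x'=y') by (apply (GoodT_eq P Q T x x' x y'); auto); subst y'; exact G2|].
  destruct (Nat.eq_dec y z) as [e2|e2]; [subst z; assert (y'=z') by (apply (GoodT_eq P Q T y y' y z'); auto); subst z'; exact G1|].
  apply GoodT_lt in G1; [|lia]. apply GoodT_lt in G2; [|lia].
  destruct G1 as [a1 [b1 c1]], G2 as [a2 [b2 c2]].
  apply GoodT_intro; [lia|lia| |].
  - rewrite (bt_split P x y z), (bt_split Q x' y' z'); try lia.
    unfold SGood0 in S. destruct (Nat.eqb_spec y P), (Nat.eqb_spec y' Q); try tauto. lia. lia.
  - rewrite (bt_split P x y z) by lia.
    replace (z - x) with ((y - x) + (z - y)) by lia. replace (z' - x') with ((y' - x') + (z' - y')) by lia.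
    apply EqC_add; try lia; auto.
    pose proof (bt_cases P x y). pose proof (bt_cases P y z).
    destruct (Nat.eqb_spec y P); lia.
Qed.

Ltac clear_disj := repeat match goal with
  | H : _ \/ _ |- _ => clear H | H : _ -> _ |- _ => clear H | H : _ <-> _ |- _ => clear H
  | H : context [_ - _] |- _ => clear H end.
Ltac desub1 a b := let h := fresh in assert (h : b <= a) by (clear_disj; lia);
   let e := fresh "e" in pose proof (Nat.sub_add b a h) as e;
   let v := fresh "v" in set (v := a - b) in *; clearbody v; clear h.
Ltac desub := repeat match goal with
  | H : context [?a - ?b] |- _ => desub1 a b
  | |- context [?a - ?b] => desub1 a b end.
Ltac dlia := desub; lia.
Ltac gi_out := apply GoodT_intro; [dlia|dlia|rewrite !bt_out by dlia; dlia|rewrite bt_out by dlia; unfold EqC; dlia].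
Ltac gi_in := apply GoodT_intro; [dlia|dlia|rewrite !bt_in by dlia; dlia|rewrite bt_in by dlia; unfold EqC; dlia].
Ltac sg := match goal with |- SGoodT ?P ?Q ?T ?i ?j => unfold SGoodT; split; [lia|]; unfold EqC in *;
  first [rewrite (dist_le i P), (dist_le j Q) by lia | rewrite (dist_ge i P), (dist_ge j Q) by lia]; dlia end.

Lemma core_pos n P Q T (R : nat -> nat -> Prop) :
  2 <= T -> 1 <= P <= n -> 1 <= Q <= n ->
  R 1 1 -> R n n -> (forall x x', R x x' -> 1 <= x <= n /\ 1 <= x' <= n) ->
  (forall x x' y y', R x x' -> R y y' -> GoodT P Q (2*T) x x' y y') ->
  (forall x x', R x x' -> SGoodT P Q (2*T) x x') ->
  forall i, 1 <= i <= n -> exists j, 1 <= j <= n /\ SGoodT P Q T i j /\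
     forall x x', R x x' -> GoodT P Q T i j x x'.
Proof.
  intros HT HP HQ R1 Rn Rr HG HS i Hi.
  destruct (classic (i = P)) as [HiP|HiP].
  { subst i. exists Q. split; [lia|]. split; [unfold SGoodT, EqC, dist; lia|].
    intros x x' Rx. destruct (HS x x' Rx) as [S1 S2]. pose proof (Rr x x' Rx). unfold dist in S2.
    destruct S1 as [S1|[S1|S1]].
    - apply GoodT_sym. apply GoodT_intro; [lia|lia|rewrite !bt_out by lia; lia|].
      rewrite bt_out by lia. unfold EqC in *. lia.
    - replace x with P by lia. replace x' with Q by lia. unfold GoodT, Good0, EqC, bt, dist. rewrite !Nat.ltb_irrefl. simpl. lia.
    - apply GoodT_intro; [lia|lia|rewrite !bt_out by lia; lia|].
      rewrite bt_out by lia. unfold EqC in *. lia. }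
  destruct (classic (exists x', R i x')) as [[x' Rix]|Hno].
  { exists x'. split; [apply (Rr i x' Rix)|]. split.
    - apply SGoodT_mono, HS, Rix.
    - intros y y' Ry. apply GoodT_mono, HG; auto. }
  destruct (ex_max (fun x => exists x', R x x') i) as [l [Hl [[l' Rl] Hlm]]];
    [eauto|lia|].
  destruct (ex_min (fun x => exists x', R x x') n) with (d := n - i) (i := i)
    as [u [Hu [[u' Ru] Hum]]]; [eauto|lia|lia|].
  assert (l < i) by (destruct (Nat.eq_dec l i); [subst; exfalso; apply Hno; eauto|lia]).
  assert (i < u) by (destruct (Nat.eq_dec u i); [subst; exfalso; apply Hno; eauto|lia]).
  assert (Hsplit : forall x x', R x x' -> x <= l \/ u <= x).
  { intros x x' Rx. destruct (le_lt_dec x i).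
    - left. apply Hlm; eauto.
    - right. apply Hum; eauto. lia. }
  assert (Hfin : forall j, 1 <= j <= n -> SGoodT P Q T i j -> GoodT P Q T l l' i j ->
     GoodT P Q T i j u u' ->
     exists j, 1 <= j <= n /\ SGoodT P Q T i j /\ forall x x', R x x' -> GoodT P Q T i j x x').
  { intros j Hj Sj Gl Gu. exists j. split; auto. split; auto.
    assert (l' < j) by (apply GoodT_lt in Gl; lia).
    assert (j < u') by (apply GoodT_lt in Gu; lia).
    intros x x' Rx. destruct (Hsplit x x' Rx).
    - apply GoodT_sym. apply GoodT_trans with l l'; [lia| |exact Gl|].
      + apply GoodT_mono, HG; auto.
      + apply SGoodT_0 with (2*T). apply HS; auto.
    - apply GoodT_trans with u u'; [lia|exact Gu| |].
      + apply GoodT_mono, HG; auto.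
      + apply SGoodT_0 with (2*T). apply HS; auto. }
  pose proof (HG l l' u u' Rl Ru) as Glu. apply GoodT_lt in Glu; [|lia].
  destruct Glu as [Hlu' [Hbt Hcap]].
  destruct (HS l l' Rl) as [Sl1 Sl2]. destruct (HS u u' Ru) as [Su1 Su2].
  pose proof (Rr l l' Rl). pose proof (Rr u u' Ru).
  clear HG HS Hlm Hum Hsplit Rr.
  destruct (bt_cases P l u) as [[b1 b2]|[b1 b2]]; [lia| |].
  all: destruct Sl1 as [Sl1|[Sl1|Sl1]]; try (exfalso; lia).
  all: destruct Su1 as [Su1|[Su1|Su1]]; try (exfalso; lia).
  all: rewrite b1 in Hbt, Hcap; symmetry in Hbt.
  all: first [rewrite (dist_le l P), (dist_le l' Q) in Sl2 by lia | rewrite (dist_ge l P), (dist_ge l' Q) in Sl2 by lia].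
  all: first [rewrite (dist_le u P), (dist_le u' Q) in Su2 by lia | rewrite (dist_ge u P), (dist_ge u' Q) in Su2 by lia].

  1: { destruct (bt_cases Q l' u') as [[c1 c2]|[c1 c2]]; [lia| |lia].
    unfold EqC in *.
    destruct (Nat.lt_ge_cases i P) as [HiP'|HiP'].
    + destruct (Nat.eq_dec (P - l) (Q - l')).
      * apply (Hfin (l' + (i - l))); [dlia|sg|gi_out|gi_in].
      * destruct (lt_dec (i - l) T).
        { apply (Hfin (l' + (i - l))); [dlia|sg|gi_out|gi_in]. }
        destruct (le_dec (P - i) (T - 1)).
        { apply (Hfin (Q - (P - i))); [dlia|sg|gi_out|gi_in]. }
        apply (Hfin (l' + T)); [dlia|sg|gi_out|gi_in].
    + destruct (Nat.eq_dec (u - P) (u' - Q)).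
      * apply (Hfin (u' - (u - i))); [dlia|sg|gi_in|gi_out].
      * destruct (lt_dec (u - i) T).
        { apply (Hfin (u' - (u - i))); [dlia|sg|gi_in|gi_out]. }
        destruct (le_dec (i - P) (T - 1)).
        { apply (Hfin (Q + (i - P))); [dlia|sg|gi_in|gi_out]. }
        apply (Hfin (u' - T)); [dlia|sg|gi_in|gi_out]. }
  all: destruct (bt_cases Q l' u') as [[c1 c2]|[c1 c2]]; [lia|lia|].
  all: clear c2.
  all: unfold EqC in *.
  all: destruct (Nat.eq_dec (u - l) (u' - l')); 
    [ apply (Hfin (l' + (i - l))); [dlia|sg|gi_out|gi_out] |].
  all: destruct (lt_dec (i - l) T);
    [ apply (Hfin (l' + (i - l))); [dlia|sg|gi_out|gi_out] |].
  all: destruct (lt_dec (u - i) T);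
    [ apply (Hfin (u' - (u - i))); [dlia|sg|gi_out|gi_out] |].
  all: apply (Hfin (l' + T)); [dlia|sg|gi_out|gi_out].
Qed.

Lemma core_one n P Q (R : nat -> nat -> Prop) :
  1 <= P <= n -> 1 <= Q <= n ->
  R 1 1 -> R n n -> (forall x x', R x x' -> 1 <= x <= n /\ 1 <= x' <= n) ->
  (forall x x' y y', R x x' -> R y y' -> GoodT P Q (2*1) x x' y y') ->
  (forall x x', R x x' -> SGoodT P Q (2*1) x x') ->
  forall i, 1 <= i <= n -> exists j, 1 <= j <= n /\ SGood0 P Q i j /\
     forall x x', R x x' -> Good0 i j x x'.
Proof.
  intros HP HQ R1 Rn Rr HG HS i Hi.
  destruct (classic (i = P)) as [HiP|HiP].
  { subst i. exists Q. split; [lia|]. split; [unfold SGood0; tauto|].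
    intros x x' Rx. destruct (HS x x' Rx) as [S1 _]. unfold Good0. lia. }
  destruct (classic (exists x', R i x')) as [[x' Rix]|Hno].
  { exists x'. split; [apply (Rr i x' Rix)|]. split.
    - apply SGoodT_0 with (2*1). apply HS, Rix.
    - intros y y' Ry. apply (HG i x' y y' Rix Ry). }
  destruct (ex_max (fun x => exists x', R x x') i) as [l [Hl [[l' Rl] Hlm]]];
    [eauto|lia|].
  destruct (ex_min (fun x => exists x', R x x') n) with (d := n - i) (i := i)
    as [u [Hu [[u' Ru] Hum]]]; [eauto|lia|lia|].
  assert (l < i) by (destruct (Nat.eq_dec l i); [subst; exfalso; apply Hno; eauto|lia]).
  assert (i < u) by (destruct (Nat.eq_dec u i); [subst; exfalso; apply Hno; eauto|lia]).
  assert (Hsplit : forall x x', R x x' -> x <= l \/ u <= x).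
  { intros x x' Rx. destruct (le_lt_dec x i).
    - left. apply Hlm; eauto.
    - right. apply Hum; eauto. lia. }
  pose proof (HG l l' u u' Rl Ru) as Glu. apply GoodT_lt in Glu; [|lia].
  destruct Glu as [Hlu' [Hbt Hcap]]. unfold EqC in Hcap.
  pose proof (Rr l l' Rl). pose proof (Rr u u' Ru).
  assert (Hj : exists j, l' < j < u' /\ j <> Q).
  { destruct (bt_cases P l u) as [[b1 b2]|[b1 b2]]; [lia| |].
    - rewrite b1 in Hbt, Hcap. assert (u - l >= 3) by lia.
      destruct (Nat.eq_dec (l' + 1) Q); [exists (l'+2)|exists (l'+1)]; lia.
    - rewrite b1 in Hbt, Hcap. symmetry in Hbt.
      destruct (bt_cases Q l' u') as [[c1 c2]|[c1 c2]]; [lia|lia|].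
      exists (l'+1). lia. }
  destruct Hj as [j [Hj1 Hj2]]. exists j. split; [lia|]. split; [unfold SGood0; lia|].
  intros x x' Rx. destruct (Hsplit x x' Rx).
  - pose proof (HG x x' l l' Rx Rl) as [G _]. unfold Good0 in *. lia.
  - pose proof (HG x x' u u' Rx Ru) as [G _]. unfold Good0 in *. lia.
Qed.

Lemma Good0_swap x x' y y' : Good0 x x' y y' -> Good0 x' x y' y.
Proof. unfold Good0. lia. Qed.
Lemma GoodT_swap P Q T x x' y y' : GoodT P Q T x x' y y' -> GoodT Q P T x' x y' y.
Proof. intros [A [B C]]. split; [apply Good0_swap; auto|]. split; [auto|].
  rewrite <- B. unfold EqC in *. lia. Qed.
Lemma SGood0_swap P Q x x' : SGood0 P Q x x' -> SGood0 Q P x' x.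
Proof. unfold SGood0. tauto. Qed.
Lemma SGoodT_swap P Q T x x' : SGoodT P Q T x x' -> SGoodT Q P T x' x.
Proof. unfold SGoodT, EqC. lia. Qed.

Definition GoodL P Q k x x' y y' :=
  match k with 0 => Good0 x x' y y' | S _ => GoodT P Q (2^k) x x' y y' end.
Definition SGoodL P Q k x x' :=
  match k with 0 => SGood0 P Q x x' | S _ => SGoodT P Q (2^k) x x' end.

Lemma GoodL_mono P Q k x x' y y' : GoodL P Q (S k) x x' y y' -> GoodL P Q k x x' y y'.
Proof. destruct k as [|k]; unfold GoodL.
  - intros [A _]. exact A.
  - rewrite (Nat.pow_succ_r' 2 (S k)). apply GoodT_mono. Qed.
Lemma SGoodL_mono P Q k x x' : SGoodL P Q (S k) x x' -> SGoodL P Q k x x'.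
Proof. destruct k as [|k]; unfold SGoodL.
  - apply SGoodT_0.
  - rewrite (Nat.pow_succ_r' 2 (S k)). apply SGoodT_mono. Qed.
Lemma GoodL_sym P Q k x x' y y' : GoodL P Q k x x' y y' -> GoodL P Q k y y' x x'.
Proof. destruct k; simpl; [apply Good0_sym|apply GoodT_sym]. Qed.
Lemma GoodL_swap P Q k x x' y y' : GoodL P Q k x x' y y' -> GoodL Q P k x' x y' y.
Proof. destruct k; simpl; [apply Good0_swap|apply GoodT_swap]. Qed.
Lemma SGoodL_swap P Q k x x' : SGoodL P Q k x x' -> SGoodL Q P k x' x.
Proof. destruct k; simpl; [apply SGood0_swap|apply SGoodT_swap]. Qed.
Lemma GoodL_refl P Q k x x' : GoodL P Q k x x' x x'.
Proof. destruct k; simpl.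
  - unfold Good0; lia.
  - unfold GoodT, Good0, EqC. rewrite !bt_out by lia. split; [lia|]. split; [auto|]. unfold dist. lia. Qed.

Definition Inv (w w' : list bool) P Q k (a b : nat -> nat) : Prop :=
  (forall t, 1 <= eval_term w a t <= length w /\ 1 <= eval_term w' b t <= length w) /\
  (forall s t, GoodL P Q k (eval_term w a s) (eval_term w' b s) (eval_term w a t) (eval_term w' b t)) /\
  (forall t, SGoodL P Q k (eval_term w a t) (eval_term w' b t)).

Definition isv (x : nat) (t : term) : bool := match t with TVar y => Nat.eqb y x | _ => false end.
Lemma ev_upd w a x i t : eval_term w (upd a x i) t = if isv x t then i else eval_term w a t.
Proof. destruct t; reflexivity. Qed.

Lemma extend w w' P Q k a b x i j : Inv w w' P Q (S k) a b ->
  1 <= i <= length w -> 1 <= j <= length w -> SGoodL P Q k i j ->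
  (forall t, GoodL P Q k i j (eval_term w a t) (eval_term w' b t)) ->
  Inv w w' P Q k (upd a x i) (upd b x j).
Proof.
  intros [Hr [HG HS]] Hi Hj Sij Gij. split; [|split].
  - intros t. rewrite !ev_upd. destruct (isv x t); auto.
  - intros s t. rewrite !ev_upd. destruct (isv x s), (isv x t).
    + apply GoodL_refl.
    + apply Gij.
    + apply GoodL_sym, Gij.
    + apply GoodL_mono, HG.
  - intros t. rewrite !ev_upd. destruct (isv x t); auto. apply SGoodL_mono, HS.
Qed.

Lemma Inv_swap w w' P Q k a b : length w' = length w -> Inv w w' P Q k a b -> Inv w' w Q P k b a.
Proof.
  intros Hl [Hr [HG HS]]. split; [|split].
  - intros t. destruct (Hr t). destruct t; simpl in *; lia.
  - intros s t. apply GoodL_swap, HG.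
  - intros t. apply SGoodL_swap, HS.
Qed.

Lemma forth w w' P Q k a b x : length w' = length w ->
  1 <= P <= length w -> 1 <= Q <= length w ->
  Inv w w' P Q (S k) a b ->
  forall i, 1 <= i <= length w -> exists j, 1 <= j <= length w /\ Inv w w' P Q k (upd a x i) (upd b x j).
Proof.
  intros Hl HP HQ Hinv i Hi.
  pose proof Hinv as [Hr [HG HS]].
  set (R := fun y y' => exists t, eval_term w a t = y /\ eval_term w' b t = y').
  assert (R1 : R 1 1) by (exists TMin; simpl; auto).
  assert (Rn : R (length w) (length w)) by (exists TMax; simpl; auto).
  assert (Rr : forall y y', R y y' -> 1 <= y <= length w /\ 1 <= y' <= length w)
    by (intros y y' [t [<- <-]]; apply Hr).
  destruct k as [|k].
  - destruct (core_one (length w) P Q R HP HQ R1 Rn Rr) with (i := i) as [j [Hj [Sj Gj]]]; auto.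
    + intros y y' z z' [s [<- <-]] [t [<- <-]]. apply (HG s t).
    + intros y y' [t [<- <-]]. apply (HS t).
    + exists j. split; auto. apply extend; auto. intros t. apply Gj. exists t; auto.
  - destruct (core_pos (length w) P Q (2^(S k)) R) with (i := i) as [j [Hj [Sj Gj]]]; auto.
    + pose proof (Nat.pow_le_mono_r 2 1 (S k)). simpl in *. lia.
    + intros y y' z z' [s [<- <-]] [t [<- <-]]. rewrite <- Nat.pow_succ_r'. apply (HG s t).
    + intros y y' [t [<- <-]]. rewrite <- Nat.pow_succ_r'. apply (HS t).
    + exists j. split; auto. apply extend; auto. intros t. apply Gj. exists t; auto.
Qed.

Lemma back w w' P Q k a b x : length w' = length w ->
  1 <= P <= length w -> 1 <= Q <= length w ->
  Inv w w' P Q (S k) a b ->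
  forall j, 1 <= j <= length w -> exists i, 1 <= i <= length w /\ Inv w w' P Q k (upd a x i) (upd b x j).
Proof.
  intros Hl HP HQ Hinv j Hj.
  apply Inv_swap in Hinv; auto.
  destruct (forth w' w Q P k b a x) with (i := j) as [i [Hi Hinv']]; try lia; auto.
  exists i. split; [lia|]. apply Inv_swap in Hinv'; [|lia]. exact Hinv'.
Qed.

Fixpoint qrank (phi : formula) : nat :=
  match phi with
  | FEq _ _ | FLt _ _ | FS _ => 0
  | FNot p => qrank p
  | FAnd p q | FOr p q | FImp p q => Nat.max (qrank p) (qrank q)
  | FEx _ p | FAll _ p => S (qrank p)
  end.
Lemma qrank_le_qcount phi : qrank phi <= qcount phi.
Proof. induction phi; simpl; lia. Qed.

Definition mkw (n P : nat) : list bool := repeat false (P - 1) ++ true :: repeat false (n - P).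
Lemma mkw_length n P : 1 <= P <= n -> length (mkw n P) = n.
Proof. intros. unfold mkw. rewrite length_app. simpl. rewrite !repeat_length. lia. Qed.
Lemma nth_mkw n P x : 1 <= P -> 1 <= x -> (nth (x - 1) (mkw n P) false = true <-> x = P).
Proof.
  intros HP Hx. unfold mkw. destruct (lt_eq_lt_dec (x - 1) (P - 1)) as [[h|h]|h].
  - rewrite app_nth1 by (rewrite repeat_length; lia). rewrite nth_repeat. split; [discriminate|lia].
  - rewrite app_nth2 by (rewrite repeat_length; lia). rewrite repeat_length.
    replace (x - 1 - (P - 1)) with 0 by lia. simpl. split; auto; lia.
  - rewrite app_nth2 by (rewrite repeat_length; lia). rewrite repeat_length.
    replace (x - 1 - (P - 1)) with (S (x - 1 - (P - 1) - 1)) by lia. simpl.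
    rewrite nth_repeat. split; [discriminate|lia].
Qed.

Lemma GoodL_0 P Q k x x' y y' : GoodL P Q k x x' y y' -> Good0 x x' y y'.
Proof. destruct k; simpl; auto. intros [A _]; exact A. Qed.
Lemma SGoodL_0 P Q k x x' : SGoodL P Q k x x' -> SGood0 P Q x x'.
Proof. destruct k; simpl; auto. apply SGoodT_0. Qed.

Lemma ef_sound n P Q : 1 <= P <= n -> 1 <= Q <= n ->
  forall phi k a b, Inv (mkw n P) (mkw n Q) P Q k a b -> qrank phi <= k ->
  (sat (mkw n P) a phi <-> sat (mkw n Q) b phi).
Proof.
  intros HP HQ phi. pose proof (mkw_length n P HP) as L1. pose proof (mkw_length n Q HQ) as L2.
  induction phi; intros k a b Hinv Hk; simpl in Hk |- *.
  - destruct Hinv as [_ [HG _]]. pose proof (GoodL_0 _ _ _ _ _ _ _ (HG t t0)). unfold Good0 in *. lia.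
  - destruct Hinv as [_ [HG _]]. pose proof (GoodL_0 _ _ _ _ _ _ _ (HG t t0)). unfold Good0 in *. lia.
  - destruct Hinv as [Hr [_ HS]]. pose proof (SGoodL_0 _ _ _ _ _ (HS t)). unfold SGood0 in *.
    destruct (Hr t). rewrite !nth_mkw by lia. tauto.
  - rewrite (IHphi k a b); tauto.
  - rewrite (IHphi1 k a b), (IHphi2 k a b) by (auto; lia). tauto.
  - rewrite (IHphi1 k a b), (IHphi2 k a b) by (auto; lia). tauto.
  - rewrite (IHphi1 k a b), (IHphi2 k a b) by (auto; lia). tauto.
  - destruct k as [|k]; [lia|]. rewrite L1, L2. split.
    + intros [i [Hi Hs]]. rewrite <- L1 in Hi.
      destruct (forth (mkw n P) (mkw n Q) P Q k a b n0) with (i := i) as [j [Hj Hinv']]; try lia; auto.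
      exists j. split; [lia|]. apply (IHphi k (upd a n0 i) (upd b n0 j)); auto; lia.
    + intros [j [Hj Hs]]. rewrite <- L1 in Hj.
      destruct (back (mkw n P) (mkw n Q) P Q k a b n0) with (j := j) as [i [Hi Hinv']]; try lia; auto.
      exists i. split; [lia|]. apply (IHphi k (upd a n0 i) (upd b n0 j)); auto; lia.
  - destruct k as [|k]; [lia|]. rewrite L1, L2. split.
    + intros H j Hj. rewrite <- L1 in Hj.
      destruct (back (mkw n P) (mkw n Q) P Q k a b n0) with (j := j) as [i [Hi Hinv']]; try lia; auto.
      apply (IHphi k (upd a n0 i) (upd b n0 j)); auto; [lia|]. apply H. lia.
    + intros H i Hi. rewrite <- L1 in Hi.
      destruct (forth (mkw n P) (mkw n Q) P Q k a b n0) with (i := i) as [j [Hj Hinv']]; try lia; auto.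
      apply (IHphi k (upd a n0 i) (upd b n0 j)); auto; [lia|]. apply H. lia.
Qed.

Lemma lower_bound : exists N : nat, forall n : nat, (N <= n)%nat ->
     exists w w' : list bool,
       length w = n /\ length w' = n /\ w <> w' /\
       forall phi : formula, separates phi w w' ->
         (Nat.log2 n <= qcount phi)%nat.
Proof.
  exists 4. intros n Hn.
  set (Q := (n + 1) / 2). set (P := S Q).
  assert (HQ1 : 2 <= Q) by (unfold Q; apply Nat.div_le_lower_bound; lia).
  assert (HQ2 : 2 * Q <= n + 1) by (unfold Q; apply Nat.Div0.mul_div_le).
  assert (HQ3 : n <= 2 * Q) by (unfold Q; pose proof (Nat.div_mod (n+1) 2); pose proof (Nat.mod_upper_bound (n+1) 2); lia).
  exists (mkw n P), (mkw n Q).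
  split; [apply mkw_length; lia|]. split; [apply mkw_length; lia|]. split.
  { intro E. assert (H1 : nth (P - 1) (mkw n P) false = true) by (apply nth_mkw; lia).
    rewrite E in H1. apply nth_mkw in H1; lia. }
  intros phi [Hsent [Hw Hw']].
  pose proof (Nat.log2_spec n) as [L1 L2]; [lia|].
  assert (HL : 2 <= Nat.log2 n) by (change 2 with (Nat.log2 4); apply Nat.log2_le_mono; lia).
  destruct (le_lt_dec (Nat.log2 n) (qcount phi)) as [|Hlt]; [assumption|exfalso].
  remember (Nat.log2 n) as L. destruct L as [|r]; [lia|].
  assert (Hr : qrank phi <= r) by (pose proof (qrank_le_qcount phi); lia).
  apply Hw'. unfold holds in *.
  assert (Hinv : Inv (mkw n P) (mkw n Q) P Q r (fun _ => 1) (fun _ => 1)).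
  2: { apply (proj1 (ef_sound n P Q ltac:(lia) ltac:(lia) phi r (fun _ => 1) (fun _ => 1) Hinv Hr)) in Hw.
       exact Hw. }
  rewrite Nat.pow_succ_r' in L1.
  assert (Tr : 1 <= 2 ^ r) by (apply Nat.neq_0_lt_0, Nat.pow_nonzero; lia).
  pose proof (mkw_length n P ltac:(lia)) as LP. pose proof (mkw_length n Q ltac:(lia)) as LQ.
  split; [|split].
  - intros t. rewrite LP. destruct t; simpl; rewrite ?LP, ?LQ; lia.
  - intros s t. destruct r as [|r']; [lia|].
    assert (Hgen : forall x y, (x = 1 \/ x = n) -> (y = 1 \/ y = n) -> GoodT P Q (2 ^ S r') x x y y).
    { intros x y Hx Hy. unfold GoodT, Good0, EqC. split; [lia|]. split; [|left; reflexivity].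
      destruct Hx as [-> | ->], Hy as [-> | ->].
      - rewrite !bt_out by lia. reflexivity.
      - rewrite !bt_in by lia. reflexivity.
      - rewrite (bt_sym P), (bt_sym Q), !bt_in by lia. reflexivity.
      - rewrite !bt_out by lia. reflexivity. }
    simpl GoodL. destruct s, t; simpl; rewrite ?LP, ?LQ; apply Hgen; auto.
  - intros t. destruct r as [|r']; [lia|]. simpl SGoodL.
    assert (Hx : forall x, (x = 1 \/ x = n) -> SGoodT P Q (2 ^ S r') x x).
    { intros x [-> | ->]; unfold SGoodT, EqC, dist; split; try lia. }
    destruct t; simpl; rewrite ?LP, ?LQ; apply Hx; auto.
Qed.

Definition agree (k : nat) (r r' : nat -> nat) : Prop := forall j, k <= j -> r j = r' j.
Definition binds_below (k : nat) (qs : list (bool * nat)) : Prop := forall q, In q qs -> snd q < k.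

Lemma agree_upd k r r' x i : x < k -> agree k r r' -> agree k (upd r x i) r'.
Proof. intros Hx H j Hj. unfold upd. destruct (Nat.eqb_spec j x); [lia|]. apply H; auto. Qed.
Lemma agree_upd2 k r r' x i : agree k r r' -> agree k (upd r x i) (upd r' x i).
Proof. intros H j Hj. unfold upd. destruct (Nat.eqb j x); auto. Qed.

Lemma prenex_congr w k qs : binds_below k qs -> forall psi psi' r,
  (forall r', agree k r r' -> (sat w r' psi <-> sat w r' psi')) ->
  (sat w r (build_prenex qs psi) <-> sat w r (build_prenex qs psi')).
Proof.
  induction qs as [|[b x] qs IH]; intros Hb psi psi' r H.
  - simpl. apply H. intros j _. reflexivity.
  - assert (Hx : x < k) by (apply (Hb (b,x)); simpl; auto).
    assert (Hb' : binds_below k qs) by (intros q Hq; apply Hb; simpl; auto).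
    assert (K : forall i, sat w (upd r x i) (build_prenex qs psi) <-> sat w (upd r x i) (build_prenex qs psi')).
    { intros i. apply IH; auto. intros r' Hr'. apply H. intros j Hj. rewrite <- (Hr' j Hj). unfold upd.
      destruct (Nat.eqb_spec j x); [lia|auto]. }
    destruct b; simpl.
    + split; intros A i Hi; apply K; auto.
    + split; intros [i [Hi A]]; exists i; split; auto; apply K; auto.
Qed.

Lemma prenex_const w k qs : 1 <= length w -> binds_below k qs -> forall psi (Pr : Prop) r,
  (forall r', agree k r r' -> (sat w r' psi <-> Pr)) ->
  (sat w r (build_prenex qs psi) <-> Pr).
Proof.
  intros Hw. induction qs as [|[b x] qs IH]; intros Hb psi Pr r H.
  - simpl. apply H. intros j _. reflexivity.
  - assert (Hx : x < k) by (apply (Hb (b,x)); simpl; auto).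
    assert (Hb' : binds_below k qs) by (intros q Hq; apply Hb; simpl; auto).
    assert (K : forall i, sat w (upd r x i) (build_prenex qs psi) <-> Pr).
    { intros i. apply IH; auto. intros r' Hr'. apply H. intros j Hj. rewrite <- (Hr' j Hj). unfold upd.
      destruct (Nat.eqb_spec j x); [lia|auto]. }
    destruct b; simpl.
    + split.
      * intros A. apply (K 1). apply A. lia.
      * intros p i Hi. apply K. auto.
    + split.
      * intros [i [_ A]]. apply (K i). auto.
      * intros p. exists 1. split; [lia|]. apply K. auto.
Qed.

Definition okt (k : nat) (t : term) : Prop := match t with TVar j => k <= j | _ => True end.
Lemma ev_agree w k r r' t : okt k t -> agree k r r' -> eval_term w r t = eval_term w r' t.
Proof. destruct t; simpl; auto. Qed.
Lemma ev_upd_ok w k r i t : okt (S k) t -> eval_term w (upd r k i) t = eval_term w r t.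
Proof. destruct t; simpl; auto. intros H. unfold upd. destruct (Nat.eqb_spec n k); [lia|auto]. Qed.
Lemma okt_mono k t : okt (S k) t -> okt k t.
Proof. destruct t; simpl; auto. lia. Qed.

Definition FT : formula := FEq TMin TMin.
Definition FF : formula := FNot FT.
Definition Le (a b : term) : formula := FOr (FLt a b) (FEq a b).
Definition Lg (a b : term) (D : nat) : formula :=
  match D with 0 => FT | 1 => FLt a b | _ => FF end.
Definition atom1 (a b : term) (D : nat) : formula :=
  match D with 0 => FT | _ => FLt a b end.
Definition e1 D := (D + 2) / 2.
Definition e2 D := (D + 1) / 2.
Definition g1 E := (E + 1) / 2.
Definition g2 E := E / 2.

Fixpoint Cm (k : nat) (p q r : term) (D1 D2 : nat) {struct k} : formula :=
  match k with
  | 0 => FAnd (Lg p q D1) (Lg q r D2)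
  | S k' => FAnd (FAnd (atom1 p q D1) (atom1 q r D2))
      (FAnd (FImp (FAnd (Le p (TVar k')) (Le (TVar k') q))
                  (if D1 <=? 1 then FT else Dm k' p (TVar k') q (e1 D1) (e2 D1)))
            (FImp (FAnd (FLt q (TVar k')) (Le (TVar k') r))
                  (if D2 <=? 1 then FT else Dm k' q (TVar k') r (e1 D2) (e2 D2))))
  end
with Dm (k : nat) (a y b : term) (E1 E2 : nat) {struct k} : formula :=
  match k with
  | 0 => FOr (Lg a y E1) (Lg y b E2)
  | S k' => FOr (FAnd (FAnd (Le a (TVar k')) (Le (TVar k') y)) (Cm k' a (TVar k') y (g1 E1) (g2 E1)))
                (FAnd (FAnd (FLt y (TVar k')) (Le (TVar k') b)) (Cm k' y (TVar k') b (g1 E2) (g2 E2)))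
  end.

Fixpoint prefC (k : nat) : list (bool * nat) :=
  match k with 0 => [] | S k' => (true, k') :: prefD k' end
with prefD (k : nat) : list (bool * nat) :=
  match k with 0 => [] | S k' => (false, k') :: prefC k' end.

Fixpoint cb (k : nat) : nat := match k with 0 => 1 | S k' => 2 * db k' - 1 end
with db (k : nat) : nat := match k with 0 => 1 | S k' => 2 * cb k' end.

Lemma pref_below k : binds_below k (prefC k) /\ binds_below k (prefD k).
Proof. induction k as [|k [IH1 IH2]]; simpl; split; intros q Hq; simpl in Hq; try contradiction;
  destruct Hq as [<-|Hq]; simpl; try lia; [apply IH2 in Hq|apply IH1 in Hq]; lia. Qed.

Lemma sat_Le w r a b : sat w r (Le a b) <-> eval_term w r a <= eval_term w r b.
Proof. simpl. lia. Qed.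
Lemma sat_FT w r : sat w r FT <-> True. Proof. simpl. tauto. Qed.
Lemma sat_Lg w r a b D : D <= 1 -> (sat w r (Lg a b D) <-> D <= eval_term w r b - eval_term w r a).
Proof. intros HD. destruct D as [|[|D]]; simpl; lia. Qed.
Lemma sat_atom1 w r a b D : sat w r (atom1 a b D) <-> (D = 0 \/ eval_term w r a < eval_term w r b).
Proof. destruct D; simpl; lia. Qed.

Lemma ev_au w k r r' i t : okt (S k) t -> agree k (upd r k i) r' -> eval_term w r' t = eval_term w r t.
Proof. intros Ht Ha. rewrite <- (ev_agree w k (upd r k i) r' t (okt_mono k t Ht) Ha). apply ev_upd_ok; auto. Qed.
Lemma var_au k r r' i : agree k (upd r k i) r' -> r' k = i.
Proof. intros Ha. rewrite <- (Ha k (le_n k)). unfold upd. rewrite Nat.eqb_refl. reflexivity. Qed.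

Lemma div2_facts x : 2 * (x / 2) <= x <= 2 * (x / 2) + 1.
Proof. pose proof (Nat.div_mod x 2). pose proof (Nat.mod_upper_bound x 2). lia. Qed.
Lemma e_facts D : e1 D + e2 D = D + 1 /\ e2 D <= e1 D <= e2 D + 1.
Proof. unfold e1, e2. pose proof (div2_facts (D+2)). pose proof (div2_facts (D+1)). lia. Qed.
Lemma g_facts E : g1 E + g2 E = E /\ g2 E <= g1 E <= g2 E + 1.
Proof. unfold g1, g2. pose proof (div2_facts (E+1)). pose proof (div2_facts E). lia. Qed.
Lemma arithC_left pv qv D : pv <= qv -> 
  ((D = 0 \/ pv < qv) /\ (forall i, pv <= i <= qv -> D <= 1 \/ (e1 D <= i - pv \/ e2 D <= qv - i)))
  <-> D <= qv - pv.
Proof.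
  intros H. pose proof (e_facts D). split.
  - intros [A B]. destruct (le_lt_dec D 1); [lia|].
    destruct (le_lt_dec D (qv - pv)); auto.
    set (i := Nat.min (pv + e1 D - 1) qv). specialize (B i). 
    assert (pv <= i <= qv) by (unfold i; lia). specialize (B ltac:(assumption)). unfold i in B. lia.
  - intros HD. split; [lia|]. intros i Hi. destruct (le_lt_dec D 1); [left; lia|right]. lia.
Qed.

Lemma arithC_right qv sv D : qv <= sv ->
  ((D = 0 \/ qv < sv) /\ (forall i, qv < i <= sv -> D <= 1 \/ (e1 D <= i - qv \/ e2 D <= sv - i)))
  <-> D <= sv - qv.
Proof.
  intros H. pose proof (e_facts D). split.
  - intros [A B]. destruct (le_lt_dec D 1); [lia|].
    destruct (le_lt_dec D (sv - qv)); auto.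
    set (i := Nat.min (qv + e1 D - 1) sv). specialize (B i).
    assert (qv < i <= sv) by (unfold i; lia). specialize (B ltac:(assumption)). unfold i in B. lia.
  - intros HD. split; [lia|]. intros i Hi. destruct (le_lt_dec D 1); [left; lia|right]. lia.
Qed.

Lemma arithD n av yv bv E1 E2 : 1 <= av -> av <= yv -> yv <= bv -> bv <= n -> 1 <= E2 ->
  (exists v, 1 <= v <= n /\ ((av <= v <= yv /\ (g1 E1 <= v - av /\ g2 E1 <= yv - v)) \/
                             (yv < v <= bv /\ (g1 E2 <= v - yv /\ g2 E2 <= bv - v))))
  <-> (E1 <= yv - av \/ E2 <= bv - yv).
Proof.
  intros. pose proof (g_facts E1). pose proof (g_facts E2). split.
  - intros [v [Hv [A|A]]]; lia.
  - intros [A|A].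
    + exists (av + g1 E1). split; [lia|]. left. lia.
    + exists (yv + g1 E2). split; [lia|]. right. lia.
Qed.

Lemma cb_pos k : 1 <= cb k /\ 1 <= db k.
Proof. induction k; simpl; lia. Qed.

Lemma sem w (Hw : 1 <= length w) : forall k,
  (forall r p q s D1 D2, okt k p -> okt k q -> okt k s ->
    1 <= eval_term w r p -> eval_term w r p <= eval_term w r q -> eval_term w r q <= eval_term w r s ->
    eval_term w r s <= length w -> D1 <= cb k -> D2 <= cb k ->
    (sat w r (build_prenex (prefC k) (Cm k p q s D1 D2)) <->
      D1 <= eval_term w r q - eval_term w r p /\ D2 <= eval_term w r s - eval_term w r q)) /\
  (forall r a y b E1 E2, okt k a -> okt k y -> okt k b ->
    1 <= eval_term w r a -> eval_term w r a <= eval_term w r y -> eval_term w r y <= eval_term w r b ->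
    eval_term w r b <= length w -> 1 <= E1 <= db k -> 1 <= E2 <= db k ->
    (sat w r (build_prenex (prefD k) (Dm k a y b E1 E2)) <->
      E1 <= eval_term w r y - eval_term w r a \/ E2 <= eval_term w r b - eval_term w r y)).
Proof.
  induction k as [|k [IHC IHD]].
  - split.
    + intros r p q s D1 D2 _ _ _ H1 H2 H3 H4 HD1 HD2. simpl in HD1, HD2. simpl build_prenex.
      change (sat w r (FAnd (Lg p q D1) (Lg q s D2))) with (sat w r (Lg p q D1) /\ sat w r (Lg q s D2)).
      rewrite !sat_Lg by lia. tauto.
    + intros r a y b E1 E2 _ _ _ H1 H2 H3 H4 HE1 HE2. simpl in HE1, HE2. simpl build_prenex.
      change (sat w r (FOr (Lg a y E1) (Lg y b E2))) with (sat w r (Lg a y E1) \/ sat w r (Lg y b E2)).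
      rewrite !sat_Lg by lia. tauto.
  - destruct (pref_below k) as [BC BD]. split.
    + intros r p q s D1 D2 Op Oq Os H1 H2 H3 H4 HD1 HD2.
      set (pv := eval_term w r p) in *. set (qv := eval_term w r q) in *. set (sv := eval_term w r s) in *.
      cbn [prefC Cm build_prenex sat].
      match goal with |- (forall i, _ -> sat _ _ (build_prenex _ ?X)) <-> _ => set (M := X) end.
      assert (Key : forall i, 1 <= i <= length w ->
        (sat w (upd r k i) (build_prenex (prefD k) M) <->
         ((D1 = 0 \/ pv < qv) /\ (D2 = 0 \/ qv < sv)) /\
         (pv <= i <= qv -> D1 <= 1 \/ (e1 D1 <= i - pv \/ e2 D1 <= qv - i)) /\
         (qv < i <= sv -> D2 <= 1 \/ (e1 D2 <= i - qv \/ e2 D2 <= sv - i)))).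
      { intros i Hi.
        assert (Ev : forall r', agree k (upd r k i) r' ->
          eval_term w r' p = pv /\ eval_term w r' q = qv /\ eval_term w r' s = sv /\ r' k = i).
        { intros r' Ha. split; [apply (ev_au w k r r' i p Op Ha)|].
          split; [apply (ev_au w k r r' i q Oq Ha)|]. split; [apply (ev_au w k r r' i s Os Ha)|].
          apply (var_au k r r' i Ha). }
        assert (Ev1 : eval_term w (upd r k i) p = pv /\ eval_term w (upd r k i) q = qv /\
                      eval_term w (upd r k i) s = sv /\ upd r k i k = i) by (apply Ev; intros j _; auto).
        destruct (classic ((D1 = 0 \/ pv < qv) /\ (D2 = 0 \/ qv < sv))) as [HA|HA].
        2: { rewrite (prenex_const w k (prefD k) Hw BD M False). { tauto. }
             intros r' Ha. destruct (Ev r' Ha) as [E1 [E2 [E3 E4]]]. unfold M. cbn [sat].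
             rewrite !sat_atom1, E1, E2, E3. tauto. }
        assert (BLsem : pv <= i <= qv ->
          (sat w (upd r k i) (build_prenex (prefD k) (if D1 <=? 1 then FT else Dm k p (TVar k) q (e1 D1) (e2 D1)))
           <-> D1 <= 1 \/ (e1 D1 <= i - pv \/ e2 D1 <= qv - i))).
        { intros Hr. destruct (Nat.leb_spec D1 1).
          - rewrite (prenex_const w k (prefD k) Hw BD FT True). { tauto. } intros; apply sat_FT.
          - pose proof (e_facts D1). simpl cb in HD1.
            rewrite (IHD (upd r k i) p (TVar k) q (e1 D1) (e2 D1)); try (simpl; lia);
              try apply okt_mono; auto; try (simpl; lia).
            all: simpl eval_term; lia. }
        assert (BRsem : qv < i <= sv ->
          (sat w (upd r k i) (build_prenex (prefD k) (if D2 <=? 1 then FT else Dm k q (TVar k) s (e1 D2) (e2 D2)))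
           <-> D2 <= 1 \/ (e1 D2 <= i - qv \/ e2 D2 <= sv - i))).
        { intros Hr. destruct (Nat.leb_spec D2 1).
          - rewrite (prenex_const w k (prefD k) Hw BD FT True). { tauto. } intros; apply sat_FT.
          - pose proof (e_facts D2). simpl cb in HD2.
            rewrite (IHD (upd r k i) q (TVar k) s (e1 D2) (e2 D2)); try (simpl; lia);
              try apply okt_mono; auto; try (simpl; lia).
            all: simpl eval_term; lia. }
        destruct (le_lt_dec pv i); [destruct (le_lt_dec i qv)|].
        - rewrite (prenex_congr w k (prefD k) BD M (if D1 <=? 1 then FT else Dm k p (TVar k) q (e1 D1) (e2 D1)) (upd r k i)).
          { rewrite BLsem by lia. split; [intros; repeat split; auto; lia|tauto]. }
          intros r' Ha. destruct (Ev r' Ha) as [E1 [E2 [E3 E4]]]. unfold M. cbn [sat].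
          rewrite !sat_atom1, !sat_Le, E1, E2, E3. simpl eval_term. rewrite E4. split; [|intros; repeat split; auto; lia].
          intros [_ [X _]]. apply X. lia.
        - destruct (le_lt_dec i sv).
          + rewrite (prenex_congr w k (prefD k) BD M (if D2 <=? 1 then FT else Dm k q (TVar k) s (e1 D2) (e2 D2)) (upd r k i)).
            { rewrite BRsem by lia. split; [intros; repeat split; auto; lia|tauto]. }
            intros r' Ha. destruct (Ev r' Ha) as [E1 [E2 [E3 E4]]]. unfold M. cbn [sat].
            rewrite !sat_atom1, !sat_Le, E1, E2, E3. simpl eval_term. rewrite E4. split; [|intros; repeat split; auto; lia].
            intros [_ [_ X]]. apply X. lia.
          + rewrite (prenex_const w k (prefD k) Hw BD M True). { split; [intros; repeat split; auto; lia|tauto]. }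
            intros r' Ha. destruct (Ev r' Ha) as [E1 [E2 [E3 E4]]]. unfold M. cbn [sat].
            rewrite !sat_atom1, !sat_Le, E1, E2, E3. simpl eval_term. rewrite E4. split; [tauto|].
            intros _. repeat split; try tauto; intros; lia.
        - rewrite (prenex_const w k (prefD k) Hw BD M True). { split; [intros; repeat split; auto; lia|tauto]. }
          intros r' Ha. destruct (Ev r' Ha) as [E1 [E2 [E3 E4]]]. unfold M. cbn [sat].
          rewrite !sat_atom1, !sat_Le, E1, E2, E3. simpl eval_term. rewrite E4. split; [tauto|].
          intros _. repeat split; try tauto; intros; lia. }
      split.
      * intros H. assert (HA := proj1 (proj1 (Key 1 ltac:(lia)) (H 1 ltac:(lia)))).
        split.
        -- apply arithC_left; auto. split; [tauto|]. intros i Hi. apply (Key i ltac:(lia)); auto. apply H. lia.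
        -- apply arithC_right; auto. split; [tauto|]. intros i Hi. apply (Key i ltac:(lia)); auto. apply H. lia.
      * intros [C1 C2] i Hi. apply Key; auto.
        apply arithC_left in C1; auto. apply arithC_right in C2; auto.
        split; [tauto|]. split; intros; [apply C1|apply C2]; lia.
    + intros r a y b E1 E2 Oa Oy Ob H1 H2 H3 H4 HE1 HE2.
      set (av := eval_term w r a) in *. set (yv := eval_term w r y) in *. set (bv := eval_term w r b) in *.
      cbn [prefD Dm build_prenex sat].
      match goal with |- (exists i, _ /\ sat _ _ (build_prenex _ ?X)) <-> _ => set (M := X) end.
      set (CL := Cm k a (TVar k) y (g1 E1) (g2 E1)) in M.
      set (CR := Cm k y (TVar k) b (g1 E2) (g2 E2)) in M.
      assert (Key : forall v, 1 <= v <= length w ->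
        (sat w (upd r k v) (build_prenex (prefC k) M) <->
         (av <= v <= yv /\ (g1 E1 <= v - av /\ g2 E1 <= yv - v)) \/
         (yv < v <= bv /\ (g1 E2 <= v - yv /\ g2 E2 <= bv - v)))).
      { intros v Hv.
        assert (Ev : forall r', agree k (upd r k v) r' ->
          eval_term w r' a = av /\ eval_term w r' y = yv /\ eval_term w r' b = bv /\ r' k = v).
        { intros r' Ha. split; [apply (ev_au w k r r' v a Oa Ha)|].
          split; [apply (ev_au w k r r' v y Oy Ha)|]. split; [apply (ev_au w k r r' v b Ob Ha)|].
          apply (var_au k r r' v Ha). }
        assert (Ev1 : eval_term w (upd r k v) a = av /\ eval_term w (upd r k v) y = yv /\
                      eval_term w (upd r k v) b = bv /\ upd r k v k = v) by (apply Ev; intros j _; auto).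
        destruct Ev1 as [F1 [F2 [F3 F4]]].
        pose proof (g_facts E1). pose proof (g_facts E2). simpl db in HE1, HE2.
        destruct (le_lt_dec av v); [destruct (le_lt_dec v yv)|].
        - rewrite (prenex_congr w k (prefC k) BC M CL (upd r k v)).
          { unfold CL. rewrite IHC; try (simpl; lia); try apply okt_mono; auto; try (simpl; lia).
            all: simpl eval_term; rewrite ?F1, ?F2, ?F3, ?F4; lia. }
          intros r' Ha. destruct (Ev r' Ha) as [E1' [E2' [E3' E4']]]. unfold M. cbn [sat].
          rewrite !sat_Le. cbn [eval_term]. rewrite E1', E2', E3', E4'.
          split; [intros [[_ X]|[Y _]]; [exact X|lia]|intros X; left; split; [lia|exact X]].
        - destruct (le_lt_dec v bv).
          + rewrite (prenex_congr w k (prefC k) BC M CR (upd r k v)).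
            { unfold CR. rewrite IHC; try (simpl; lia); try apply okt_mono; auto; try (simpl; lia).
              all: simpl eval_term; rewrite ?F1, ?F2, ?F3, ?F4; lia. }
            intros r' Ha. destruct (Ev r' Ha) as [E1' [E2' [E3' E4']]]. unfold M. cbn [sat].
            rewrite !sat_Le. cbn [eval_term]. rewrite E1', E2', E3', E4'.
            split; [intros [[Y _]|[_ X]]; [lia|exact X]|intros X; right; split; [lia|exact X]].
          + rewrite (prenex_const w k (prefC k) Hw BC M False). { lia. }
            intros r' Ha. destruct (Ev r' Ha) as [E1' [E2' [E3' E4']]]. unfold M. cbn [sat].
            rewrite !sat_Le. cbn [eval_term]. rewrite E1', E2', E3', E4'.
            split; [intros [[Y _]|[Y _]]; lia|contradiction].
        - rewrite (prenex_const w k (prefC k) Hw BC M False). { lia. }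
          intros r' Ha. destruct (Ev r' Ha) as [E1' [E2' [E3' E4']]]. unfold M. cbn [sat].
          rewrite !sat_Le. cbn [eval_term]. rewrite E1', E2', E3', E4'.
            split; [intros [[Y _]|[Y _]]; lia|contradiction]. }
      rewrite <- (arithD (length w) av yv bv E1 E2) by lia.
      split; intros [v [Hv X]]; exists v; split; auto; apply Key; auto.
Qed.

Lemma free_prenex x qs psi : free_in x (build_prenex qs psi) -> free_in x psi /\ ~ In x (map snd qs).
Proof.
  induction qs as [|[b y] qs IH]; simpl; [tauto|].
  destruct b; simpl; intros [Hy Hf]; destruct (IH Hf); split; auto; intros [E|E]; auto.
Qed.

Lemma free_basic_unused x a b D :
  (free_in x (Lg a b D) -> term_var a x \/ term_var b x) /\
  (free_in x (atom1 a b D) -> term_var a x \/ term_var b x) /\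
  (free_in x (Le a b) -> term_var a x \/ term_var b x) /\ (~ free_in x FT).
Proof.
  unfold Lg, atom1, Le, FT, FF. repeat split.
  - destruct D as [|[|D]]; simpl; tauto.
  - destruct D; simpl; tauto.
  - simpl; tauto.
  - simpl; tauto.
Qed.

Ltac dall := repeat match goal with H : _ \/ _ |- _ => destruct H | H : _ /\ _ |- _ => destruct H end.
Lemma free_CD x : forall k,
  (forall p q s D1 D2, free_in x (Cm k p q s D1 D2) -> x < k \/ term_var p x \/ term_var q x \/ term_var s x) /\
  (forall a y b E1 E2, free_in x (Dm k a y b E1 E2) -> x < k \/ term_var a x \/ term_var y x \/ term_var b x).
Proof.
  induction k as [|k [IHC IHD]]; split.
  - intros p q s D1 D2 H. simpl in H. unfold Lg, FT, FF in H.
    destruct D1 as [|[|D1]], D2 as [|[|D2]]; simpl in H; tauto.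
  - intros a y b E1 E2 H. simpl in H. unfold Lg, FT, FF in H.
    destruct E1 as [|[|E1]], E2 as [|[|E2]]; simpl in H; tauto.
  - intros p q s D1 D2 H. simpl in H. unfold atom1, Le, FT in H. dall.
    all: try (destruct D1; simpl in *; tauto).
    all: try (destruct D2; simpl in *; tauto).
    all: try (simpl in *; lia).
    all: try (simpl in *; tauto).
    + destruct (D1 <=? 1); simpl in H; [tauto|]. apply IHD in H. simpl in H. dall; try tauto; lia.
    + destruct (D2 <=? 1); simpl in H; [tauto|]. apply IHD in H. simpl in H. dall; try tauto; lia.
  - intros a y b E1 E2 H. simpl in H. unfold Le in H. dall.
    all: try (simpl in *; lia).
    all: try (simpl in *; tauto).
    + apply IHC in H. simpl in H. dall; try tauto; lia.
    + apply IHC in H. simpl in H. dall; try tauto; lia.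
Qed.

Lemma qf_CD : forall k,
  (forall p q s D1 D2, quantifier_free (Cm k p q s D1 D2)) /\
  (forall a y b E1 E2, quantifier_free (Dm k a y b E1 E2)).
Proof.
  assert (B : forall a b D, quantifier_free (Lg a b D) /\ quantifier_free (atom1 a b D)).
  { intros a b D. unfold Lg, atom1. destruct D as [|[|D]]; simpl; tauto. }
  induction k as [|k [IHC IHD]]; split; intros; simpl.
  - split; apply B.
  - split; apply B.
  - repeat split; try apply B; try (destruct (_ <=? 1); simpl; auto).
  - repeat split; auto.
Qed.

Lemma pref_in k : forall x, x < k -> In x (map snd (prefC k)) /\ In x (map snd (prefD k)).
Proof.
  induction k as [|k IH]; intros x Hx; [lia|]. simpl.
  destruct (Nat.eq_dec x k); [subst; auto|]. destruct (IH x); [lia|]. auto.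
Qed.

Fixpoint alt (b : bool) (k : nat) : list bool := match k with 0 => [] | S k' => b :: alt (negb b) k' end.
Lemma pref_fst k : map fst (prefC k) = alt true k /\ map fst (prefD k) = alt false k.
Proof. induction k as [|k [A B]]; simpl; auto. rewrite A, B. auto. Qed.
Lemma alt_sa b k : strictly_alternating (alt b k).
Proof. revert b. induction k as [|k IH]; intros b; simpl; auto.
  destruct k; simpl; auto. split; [destruct b; discriminate|]. apply (IH (negb b)). Qed.
Lemma alt_last b k d : last (alt b (S k)) d = if Nat.even k then b else negb b.
Proof. revert b. induction k as [|k IH]; intros b; [reflexivity|].
  change (last (alt (negb b) (S k)) d = if Nat.even (S k) then b else negb b).
  rewrite IH. rewrite Nat.even_succ, <- Nat.negb_even. destruct (Nat.even k), b; reflexivity. Qed.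
Lemma last_map_fst (qs : list (bool * nat)) d : fst (last qs d) = last (map fst qs) (fst d).
Proof. induction qs as [|q qs IH]; simpl; auto. destruct qs; simpl in *; auto. Qed.

Lemma qcount_prenex qs psi : qcount (build_prenex qs psi) = length qs + qcount psi.
Proof. induction qs as [|[[|] x] qs IH]; simpl; lia. Qed.
Lemma qcount_qf psi : quantifier_free psi -> qcount psi = 0.
Proof. induction psi; simpl; intuition; lia. Qed.
Lemma pref_len k : length (prefC k) = k /\ length (prefD k) = k.
Proof. induction k as [|k [A B]]; simpl; auto. Qed.

Lemma cb_odd j : 3 * cb (2 * j + 1) = 2 * 4 ^ j + 1.
Proof. induction j as [|j IH]; [reflexivity|].
  replace (2 * S j + 1) with (S (S (2 * j + 1))) by lia.
  change (cb (S (S (2*j+1)))) with (2 * db (S (2*j+1)) - 1).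
  change (db (S (2*j+1))) with (2 * cb (2*j+1)).
  rewrite Nat.pow_succ_r'. pose proof (cb_pos (2*j+1)). lia. Qed.

Definition topm (K i n : nat) (b : bool) : formula :=
  FAnd (if b then FS (TVar K) else FNot (FS (TVar K))) (Cm K TMin (TVar K) TMax (i - 1) (n - i)).
Definition topf (K i n : nat) (b : bool) : formula :=
  build_prenex ((false, K) :: prefC K) (topm K i n b).

Lemma topf_sem w0 K i b r : 1 <= i <= length w0 -> i - 1 <= cb K -> length w0 - i <= cb K ->
  (sat w0 r (topf K i (length w0) b) <-> nth (i - 1) w0 false = b).
Proof.
  intros Hi H1 H2. set (n := length w0) in *.
  assert (Hw : 1 <= length w0) by lia.
  destruct (pref_below K) as [BC _].
  unfold topf. cbn [build_prenex sat].
  assert (Key : forall x, 1 <= x <= n ->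
    (sat w0 (upd r K x) (build_prenex (prefC K) (topm K i n b)) <-> (nth (x - 1) w0 false = b /\ x = i))).
  { intros x Hx.
    assert (Sx : forall r', agree K (upd r K x) r' ->
      (sat w0 r' (if b then FS (TVar K) else FNot (FS (TVar K))) <-> nth (x - 1) w0 false = b)).
    { intros r' Ha. pose proof (var_au K r r' x Ha) as E. destruct b; simpl; rewrite E; [tauto|].
      destruct (nth (x - 1) w0 false); split; congruence. }
    destruct (classic (nth (x - 1) w0 false = b)) as [Hb|Hb].
    - rewrite (prenex_congr w0 K (prefC K) BC (topm K i n b) (Cm K TMin (TVar K) TMax (i - 1) (n - i)) (upd r K x)).
      + rewrite (proj1 (sem w0 Hw K)).
        all: simpl; unfold upd; rewrite ?Nat.eqb_refl; try lia.
        split; [intros; split; auto; lia|intros [_ ->]; lia].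
      + intros r' Ha. unfold topm. cbn [sat]. rewrite (Sx r' Ha). tauto.
    - rewrite (prenex_const w0 K (prefC K) Hw BC (topm K i n b) False (upd r K x)); [tauto|].
      intros r' Ha. unfold topm. cbn [sat]. rewrite (Sx r' Ha). tauto. }
  split.
  - intros [x [Hx S]]. apply Key in S; [|exact Hx]. destruct S as [S ->]. exact S.
  - intros Hb. exists i. split; [lia|]. apply Key; auto.
Qed.

Lemma topf_sentence K i n b : sentence (topf K i n b).
Proof.
  intros x Hf. unfold topf in Hf. apply free_prenex in Hf. destruct Hf as [Hf Hn].
  simpl map in Hn. unfold topm in Hf. simpl in Hf. destruct Hf as [Hf|Hf].
  - destruct b; simpl in Hf; apply Hn; left; auto.
  - apply (proj1 (free_CD x K)) in Hf. simpl in Hf.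
    destruct Hf as [Hf|[Hf|[Hf|Hf]]]; try contradiction.
    + apply Hn. right. apply (proj1 (pref_in K x Hf)).
    + apply Hn. left. auto.
Qed.

Lemma topf_alt K i n b : Nat.odd K = true -> alt_prenex_ending_forall (topf K i n b).
Proof.
  intros HK. exists ((false, K) :: prefC K), (topm K i n b). split; [|split; [reflexivity|]].
  - unfold topm. simpl. split; [destruct b; simpl; auto|]. apply (proj1 (qf_CD K)).
  - split; [|split; [discriminate|]].
    + simpl map. rewrite (proj1 (pref_fst K)). apply (alt_sa false (S K)).
    + rewrite last_map_fst. simpl map. rewrite (proj1 (pref_fst K)).
      change (last (alt false (S K)) true = true). rewrite alt_last.
      rewrite <- Nat.negb_odd, HK. reflexivity.
Qed.

Lemma topf_count K i n b : qcount (topf K i n b) = S K.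
Proof. unfold topf. rewrite qcount_prenex, qcount_qf.
  - simpl. rewrite (proj1 (pref_len K)). lia.
  - unfold topm. simpl. split; [destruct b; simpl; auto|]. apply (proj1 (qf_CD K)).
Qed.

Lemma log_bound n L : (1 <= n)%nat -> (2 ^ L <= n)%nat -> (INR L <= ln (INR n) / ln 2)%R.
Proof.
  intros Hn HL.
  assert (Hl2 : (0 < ln 2)%R) by (rewrite <- ln_1; apply ln_increasing; lra).
  assert (Hp : (INR (2 ^ L) <= INR n)%R) by (apply le_INR; exact HL).
  rewrite pow_INR in Hp. simpl (INR 2) in Hp.
  assert (Hpos : (0 < (1 + 1) ^ L)%R) by (apply pow_lt; lra).
  assert (Hln : (ln ((1+1) ^ L) <= ln (INR n))%R).
  { destruct (Rle_lt_or_eq_dec _ _ Hp) as [h|h]; [left; apply ln_increasing; auto|rewrite h; lra]. }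
  rewrite ln_pow in Hln by lra. replace (1+1)%R with 2%R in Hln by lra.
  apply Rmult_le_reg_r with (ln 2); auto. unfold Rdiv. rewrite Rmult_assoc, Rinv_l by lra. lra.
Qed.

Lemma upper : exists C : R,
     forall (n : nat) (w w' : list bool),
       (1 <= n)%nat -> length w = n -> length w' = n -> w <> w' ->
       exists phi : formula,
         separates phi w w' /\ alt_prenex_ending_forall phi /\
         (INR (qcount phi) <= ln (INR n) / ln 2 + C)%R.
Proof.
  exists 5%R. intros n w w' Hn Hw Hw' Hne.
  assert (Hi : exists i, (1 <= i <= n)%nat /\ nth (i-1) w false <> nth (i-1) w' false).
  { destruct (classic (exists i, (1 <= i <= n)%nat /\ nth (i-1) w false <> nth (i-1) w' false)) as [h|h]; auto.
    exfalso. apply Hne. apply nth_ext with false false; [lia|]. intros m Hm.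
    destruct (Bool.bool_dec (nth m w false) (nth m w' false)) as [e|e]; auto.
    exfalso. apply h. exists (S m). replace (S m - 1)%nat with m by lia. split; [lia|auto]. }
  destruct Hi as [i [Hi Hd]].
  set (L := Nat.log2 n). set (j := ((L + 3) / 2)%nat). set (K := (2 * j + 1)%nat).
  pose proof (Nat.log2_spec n ltac:(lia)) as [L1 L2]. fold L in L1, L2.
  assert (Hj : (L + 2 <= 2 * j <= L + 3)%nat).
  { unfold j. pose proof (Nat.div_mod (L+3) 2). pose proof (Nat.mod_upper_bound (L+3) 2). lia. }
  assert (HcbK : (n <= cb K)%nat).
  { pose proof (cb_odd j) as C. fold K in C.
    assert (E : (4 ^ j = 2 ^ (2 * j))%nat) by (rewrite Nat.pow_mul_r; reflexivity).
    assert (M : (2 ^ (L + 2) <= 2 ^ (2 * j))%nat) by (apply Nat.pow_le_mono_r; lia).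
    rewrite Nat.pow_add_r in M. rewrite Nat.pow_succ_r' in L2. simpl (2 ^ 2)%nat in M. lia. }
  assert (Kodd : Nat.odd K = true).
  { unfold K. rewrite Nat.odd_add, Nat.odd_mul. reflexivity. }
  exists (topf K i n (nth (i - 1) w false)).
  split; [|split].
  - split; [apply topf_sentence|]. split.
    + unfold holds. rewrite <- Hw. rewrite topf_sem by lia. reflexivity.
    + unfold holds. rewrite <- Hw'. rewrite topf_sem by lia. auto.
  - apply topf_alt; auto.
  - rewrite topf_count. 
    assert (HK : (S K <= L + 5)%nat) by (unfold K; lia).
    apply le_INR in HK. rewrite plus_INR in HK. simpl (INR 5) in HK.
    pose proof (log_bound n L Hn L1). lra.
Qed.

Theorem mainTheorem7 :
  (exists C : R,
     forall (n : nat) (w w' : list bool),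
       (1 <= n)%nat -> length w = n -> length w' = n -> w <> w' ->
       exists phi : formula,
         separates phi w w' /\ alt_prenex_ending_forall phi /\
         (INR (qcount phi) <= ln (INR n) / ln 2 + C)%R)
  /\
  (exists N : nat, forall n : nat, (N <= n)%nat ->
     exists w w' : list bool,
       length w = n /\ length w' = n /\ w <> w' /\
       forall phi : formula, separates phi w w' ->
         (Nat.log2 n <= qcount phi)%nat).
Proof.
  split; [exact upper | exact lower_bound].
Qed.
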